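(* Let $G=(V,E,w)$ be a transitive DAG with nonnegative vertex weights, let $U\subseteq V$ be nonempty and let $d\ge \frac12|U|$. Then there exists a vertex $v\in U_d$ with $r_U(v)=\mathrm{opt}(U)$. In particular $\max_{v\in U_d} r_U(v)=\mathrm{opt}(U)$.
   Context: A DAG $G=(V,E)$ is transitive if $(v_1,v_2),(v_2,v_3)\in E$ implies $(v_1,v_3)\in E$. A chain is a set of vertices any two distinct members of which are joined by an edge; its weight is the sum of the weights of its vertices. For $U\subseteq V$, $\mathrm{opt}(U)$ is the maximum weight of a chain contained in $U$. For $v\in U$, $r_U(v)$ is the maximum weight of a chain contained in $U$ that contains $v$; $U_{-v}=\{u\in U:(u,v)\in E\}$ and $U_{+v}=\{u\in U:(v,u)\in E\}$; and for a real $d$, $U_d=\{v\in U:\max(|U_{-v}|,|U_{+v}|)\le d\}$. *)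

(* Defs.v *)
From mathcomp Require Import all_boot all_order all_algebra.
Set Implicit Arguments. Unset Strict Implicit. Unset Printing Implicit Defensive.
Import Order.TTheory GRing.Theory Num.Theory.
Local Open Scope ring_scope.

Section Chains.
Variables (T : finType) (E : rel T) (R : realFieldType) (w : T -> R).

Definition acyclic : Prop := forall x y, E x y -> ~~ connect E y x.
Definition transitive_rel : Prop := forall x y z, E x y -> E y z -> E x z.

Definition is_chain (C : {set T}) : bool :=
  [forall x in C, forall y in C, (x != y) ==> (E x y || E y x)].

Definition weight (C : {set T}) : R := \sum_(x in C) w x.

(* opt(U): max weight of a chain contained in U (empty chain has weight 0;
   with nonnegative weights, the max with 0 is harmless). *)
Definition opt (U : {set T}) : R :=
  \big[Num.max/0]_(C : {set T} | is_chain C && (C \subset U)) weight C.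

Definition rU (U : {set T}) (v : T) : R :=
  \big[Num.max/0]_(C : {set T} | [&& is_chain C, C \subset U & v \in C]) weight C.

Definition Uminus (U : {set T}) (v : T) : {set T} := [set u in U | E u v].
Definition Uplus (U : {set T}) (v : T) : {set T} := [set u in U | E v u].

Definition Ud (U : {set T}) (d : R) : {set T} :=
  [set v in U | (#|Uminus U v|%:R <= d) && (#|Uplus U v|%:R <= d)].
End Chains.

(* Main.v *)
Require Import Defs.
From mathcomp Require Import all_boot all_order all_algebra.
From mathcomp Require Import zify.
Import Order.TTheory GRing.Theory Num.Theory.
Local Open Scope ring_scope.

Section Aux.
Variable R : realFieldType.

Lemma bigmax_leM (I : finType) (P : pred I) (F : I -> R) (M : R) :
  0 <= M -> (forall i, P i -> F i <= M) -> \big[Num.max/0]_(i | P i) F i <= M.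
Proof.
move=> h0 h; apply: (big_ind (fun x => x <= M)) => //.
by move=> x y hx hy; rewrite ge_max hx hy.
Qed.

Lemma le_bigmaxs (I : eqType) (r : seq I) (P : pred I) (F : I -> R) i :
  i \in r -> P i -> F i <= \big[Num.max/0]_(j <- r | P j) F j.
Proof.
elim: r => //= a r IH; rewrite inE big_cons; case/orP => [/eqP<-|/IH H] Pi.
  by rewrite Pi le_max lexx.
by case: (P a); rewrite ?le_max ?H ?orbT.
Qed.

Lemma bigmaxE (I : finType) (P : pred I) (F : I -> R) (M : R) i0 :
  0 <= M -> P i0 -> F i0 = M -> (forall i, P i -> F i <= M) ->
  \big[Num.max/0]_(i | P i) F i = M.
Proof.
move=> h0 Pi0 Fi0 h; apply/le_anti/andP; split; first exact: bigmax_leM.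
rewrite -{1}Fi0; apply: le_bigmaxs => //; exact: mem_index_enum.
Qed.
End Aux.

Theorem mainTheorem2 (T : finType) (E : rel T) (R : realFieldType)
  (w : T -> R) (U : {set T}) (d : R) :
  acyclic E -> transitive_rel E ->
  (forall v, 0 <= w v) ->
  U != set0 ->
  #|U|%:R / 2 <= d ->
  (exists2 v, v \in Ud E U d & rU E w U v = opt E w U) /\
  \big[Num.max/0]_(v in Ud E U d) rU E w U v = opt E w U.
Proof.
move=> hac htr hw hU hd.
have irr : forall x, ~~ E x x.
  by move=> x; apply/negP => hx; move: (hac _ _ hx); rewrite connect0.
have chainP : forall C x y, is_chain E C -> x \in C -> y \in C -> x != y ->
    E x y || E y x.
  move=> C x y /forallP /(_ x) /implyP hC xC yC; move: (hC xC).
  by move/forallP/(_ y)/implyP/(_ yC)/implyP.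
have d0 : 0 <= d by apply: le_trans hd; rewrite divr_ge0 ?ler0n.
pose cand C := is_chain E C && (C \subset U).
have cand0 : cand set0.
  by rewrite /cand sub0set andbT; apply/forallP => x; rewrite in_set0.
pose C1 := [arg max_(C > set0 | cand C) weight w C]%O.
have [C1c HC1] : cand C1 /\ forall C, cand C -> weight w C <= weight w C1.
  by rewrite /C1; case: arg_maxP => // C hC hmax; split.
have w0 : 0 <= weight w C1.
  by apply: le_trans (HC1 _ cand0); rewrite /weight big_set0.
have optE : opt E w U = weight w C1.
  by rewrite /opt; apply: (@bigmaxE R _ cand _ _ C1 w0 C1c).
pose C := [arg max_(C > C1 | cand C && (weight w C == weight w C1)) #|C|].
have [Cc CW Cmax] : [/\ cand C, weight w C = weight w C1 &
   forall D, cand D -> weight w D = weight w C1 -> (#|D| <= #|C|)%N].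
  rewrite /C; case: arg_maxnP; first by rewrite C1c eqxx.
  move=> D /andP[Dc /eqP DW] hD; split => // D' D'c D'W.
  by apply: hD; rewrite D'c D'W eqxx.
case/andP: Cc => Cch CU.
have maxl : forall u, u \in U ->
    (forall c, c \in C -> c != u -> E u c || E c u) -> u \in C.
  move=> u uU hu; apply/negPn/negP => uC.
  have Dc : cand (u |: C).
    apply/andP; split; last by rewrite subUset sub1set uU CU.
    apply/forallP => x; apply/implyP => xD; apply/forallP => y; apply/implyP => yD.
    apply/implyP => xy; move: xD yD; rewrite !in_setU1.
    case/orP => [/eqP xu|xC]; case/orP => [/eqP yu|yC].
    - by move: xy; rewrite xu yu eqxx.
    - by rewrite xu; apply: hu => //; rewrite -xu eq_sym.
    - by rewrite yu orbC; apply: hu => //; rewrite -yu.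
    - exact: (chainP C).
  have DW : weight w (u |: C) = weight w C1.
    apply/le_anti; rewrite HC1 //= /weight big_setU1 //= -/(weight w C) CW.
    by rewrite lerDr.
  by move: (Cmax _ Dc DW); rewrite cardsU1 uC ltnn.
have CinU : forall c, c \in C -> c \in U by move=> c cC; apply: (subsetP CU).
pose m c := #|Uminus E U c|.
have mlt : forall a b, a \in U -> E a b -> (m a < m b)%N.
  move=> a b aU ab; rewrite /m.
  have : (#|a |: Uminus E U a| <= #|Uminus E U b|)%N.
    apply: subset_leq_card; apply/subsetP => x; rewrite in_setU1 !inE.
    case/orP => [/eqP->|/andP[xU xa]]; first by rewrite aU ab.
    by rewrite xU (htr _ _ _ xa ab).
  rewrite cardsU1 inE (negbTE (irr a)) andbF; lia.
have [u0 u0U] : exists u0, u0 \in U by case/set0Pn: hU => x hx; exists x.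
have [c0 c0C] : exists c0, c0 \in C.
  case: (set_0Vmem C) => [C0|[c hc]]; last by exists c.
  by exists u0; apply: maxl => // c; rewrite C0 in_set0.
pose cmin := [arg min_(c < c0 in C) m c].
have [cminC cminP] : cmin \in C /\ forall c, c \in C -> (m cmin <= m c)%N.
  by rewrite /cmin; case: arg_minnP => // c hc hmin; split.
have mcmin : m cmin = 0%N.
  apply/eqP; rewrite cards_eq0; apply/eqP/setP => u; rewrite !inE.
  apply/negP => /andP[uU ucm].
  have uC : u \in C.
    apply: maxl => // c cC cu.
    case: (eqVneq c cmin) => [->|ccm]; first by rewrite ucm.
    case/orP: (chainP _ _ _ Cch cC cminC ccm) => h.
      by have := leq_trans (mlt _ _ (CinU _ cC) h) (cminP _ cC); rewrite ltnn.
    by rewrite (htr _ _ _ ucm h).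
  by have := leq_trans (mlt _ _ uU ucm) (cminP _ uC); rewrite ltnn.
pose Pv c := (c \in C) && ((m c)%:R <= d).
have Pcmin : Pv cmin by rewrite /Pv cminC mcmin.
pose v := [arg max_(c > cmin | Pv c) m c].
have [vC mvd vmax] : [/\ v \in C, (m v)%:R <= d &
    forall c, c \in C -> (m c)%:R <= d -> (m c <= m v)%N].
  rewrite /v; case: arg_maxnP => // c /andP[cC cd] hmax; split => // c' c'C c'd.
  by apply: hmax; rewrite /Pv c'C.
have vU := CinU _ vC.
have vUd : v \in Ud E U d.
  rewrite inE vU /= -/(m v) mvd /=; apply/negPn/negP; rewrite -ltNge => hp.
  pose S := [set c in C | E v c].
  have [c1 c1S] : exists c1, c1 \in S.
    case: (set_0Vmem S) => [S0|[c hc]]; last by exists c.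
    have : (0 < #|Uplus E U v|)%N.
      rewrite lt0n; apply/negP => /eqP h0; move: hp; rewrite h0.
      by rewrite ltNge d0.
    case/card_gt0P => u; rewrite inE => /andP[uU vu].
    have uC : u \in C.
      apply: maxl => // c cC cu.
      case: (eqVneq c v) => [->|cv]; first by rewrite vu orbT.
      case/orP: (chainP _ _ _ Cch cC vC cv) => h.
        by rewrite (htr _ _ _ h vu) orbT.
      have : c \in S by rewrite inE cC h.
      by rewrite S0 in_set0.
    have : u \in S by rewrite inE uC vu.
    by rewrite S0 in_set0.
  pose c' := [arg min_(c < c1 in S) m c].
  have [c'S c'min] : c' \in S /\ forall c, c \in S -> (m c' <= m c)%N.
    by rewrite /c'; case: arg_minnP => // c hc hmin; split.
  have [c'C vc'] : c' \in C /\ E v c' by move: c'S; rewrite inE => /andP.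
  have Sbig : forall c, c \in S -> d < (m c)%:R.
    move=> c; rewrite inE => /andP[cC vcc]; rewrite ltNge; apply/negP => cd.
    by have := leq_trans (mlt _ _ vU vcc) (vmax _ cC cd); rewrite ltnn.
  have hc'd := Sbig _ c'S.
  have : (#|U| < #|Uplus E U v| + m c')%N.
    rewrite -(ltr_nat R) natrD; apply: le_lt_trans (ltrD hp hc'd).
    apply: le_trans (lerD hd hd); by rewrite -splitr.
  have : (#|Uplus E U v :|: Uminus E U c'| <= #|U|)%N.
    apply: subset_leq_card; rewrite subUset; apply/andP; split;
      by apply/subsetP => x; rewrite inE => /andP[].
  move=> h1 h2; have h3 := cardsUI (Uplus E U v) (Uminus E U c').
  have : (0 < #|Uplus E U v :&: Uminus E U c'|)%N.
    rewrite lt0n; apply/negP => /eqP h0; rewrite h0 addn0 in h3.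
    by move: h2; rewrite /m -h3 ltnNge h1.
  case/card_gt0P => u; rewrite !inE => /andP[/andP[uU vu] /andP[_ uc']].
  have uC : u \in C.
    apply: maxl => // c cC cu.
    case: (eqVneq c v) => [->|cv]; first by rewrite vu orbT.
    case: (eqVneq c c') => [->|cc']; first by rewrite uc'.
    case/orP: (chainP _ _ _ Cch cC vC cv) => h.
      by rewrite (htr _ _ _ h vu) orbT.
    case/orP: (chainP _ _ _ Cch cC c'C cc') => h4.
      have cS : c \in S by rewrite inE cC h.
      by have := leq_trans (mlt _ _ (CinU _ cC) h4) (c'min _ cS); rewrite ltnn.
    by rewrite (htr _ _ _ uc' h4).
  have uS : u \in S by rewrite inE uC vu.
  by have := leq_trans (mlt _ _ uU uc') (c'min _ uS); rewrite ltnn.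
have rUle : forall x, rU E w U x <= weight w C1.
  move=> x; apply: bigmax_leM => // D /and3P[Dch DU _].
  by apply: HC1; rewrite /cand Dch DU.
have rUv : rU E w U v = opt E w U.
  rewrite optE /rU; apply: (@bigmaxE R _ _ _ _ C w0) => //.
    by rewrite Cch CU vC.
  by move=> D /and3P[Dch DU _]; apply: HC1; rewrite /cand Dch DU.
split; first by exists v.
rewrite optE; apply: (@bigmaxE R _ _ _ _ v w0) => //; by rewrite -optE.
Qed.
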